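(* For every integer $m\ge 2$, the shift graph $H_m$ belongs to $(m-1)$-CBU. Furthermore, $H_m$ has a CBU representation in which, in the first dimension (the coordinate along $e_1$), the box of the vertex $(i,j)$ projects onto the interval $[i,j]$.
   Context: The shift graph $H_m$ has as vertices the ordered pairs $(i,j)$ of integers with $1\le i<j\le m$, and two pairs $(i,j)$ and $(k,l)$ are adjacent iff $j=k$ or $l=i$. Let $e_1,\ldots,e_d$ be the standard basis of $\mathbb{R}^d$. For $d\ge 1$, a graph belongs to $d$-CBU if one can assign to each vertex an axis-parallel box (product of $d$ closed intervals of positive length) in $\mathbb{R}^d$ such that the boxes have pairwise disjoint interiors, two distinct vertices are adjacent iff their boxes intersect, and any two intersecting boxes intersect in a $(d-1)$-dimensional box orthogonal to $e_1$; such an assignment is a CBU representation. *)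

(* Defs.v *)
From HB Require Import structures.
From mathcomp Require Import all_boot all_order all_algebra.
From mathcomp Require Import reals.
Set Implicit Arguments. Unset Strict Implicit. Unset Printing Implicit Defensive.
Import Order.TTheory GRing.Theory Num.Theory.
Local Open Scope ring_scope.

Section Boxes.
Variable R : realType.

(* An axis-parallel box prod_k [lo k, hi k] in R^d (positivity of lengths is
   required separately in CBU_rep). Coordinate 0 is the e_1 direction. *)
Record box (d : nat) := Box { lo : 'I_d -> R ; hi : 'I_d -> R }.

Definition in_box d (B : box d) (x : 'I_d -> R) : Prop :=
  forall k, lo B k <= x k <= hi B k.

Definition in_interior d (B : box d) (x : 'I_d -> R) : Prop :=
  forall k, lo B k < x k < hi B k.

Definition boxes_meet d (B1 B2 : box d) : Prop :=
  exists x, in_box B1 x /\ in_box B2 x.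

Definition meet_is_facet_orth_e1 d (B1 B2 : box d) : Prop :=
  exists (c : R) (lo' hi' : 'I_d -> R),
    (forall k : 'I_d, val k != 0%N -> lo' k < hi' k) /\
    (forall x, (in_box B1 x /\ in_box B2 x) <->
       (forall k : 'I_d, if val k == 0%N then x k = c
                         else lo' k <= x k <= hi' k)).

Definition CBU_rep d (V : Type) (adj : V -> V -> Prop) (B : V -> box d) : Prop :=
  [/\ (forall v k, lo (B v) k < hi (B v) k),
      (forall u v, u <> v -> ~ exists x, in_interior (B u) x /\ in_interior (B v) x),
      (forall u v, u <> v -> (adj u v <-> boxes_meet (B u) (B v)))
    & (forall u v, u <> v -> boxes_meet (B u) (B v) ->
                   meet_is_facet_orth_e1 (B u) (B v))].

Definition in_CBU d (V : Type) (adj : V -> V -> Prop) : Prop :=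
  exists B : V -> box d, CBU_rep adj B.

End Boxes.

Definition shift_vertex (m : nat) : Type :=
  {p : nat * nat | (1 <= p.1)%N && (p.1 < p.2)%N && (p.2 <= m)%N}.

Definition shift_adj (m : nat) (u v : shift_vertex m) : Prop :=
  (val u).2 = (val v).1 \/ (val v).2 = (val u).1.

(* Main.v *)
Require Import Defs.
From HB Require Import structures.
From mathcomp Require Import all_boot all_order all_algebra.
From mathcomp Require Import reals.
From mathcomp Require Import lra zify.
Import Order.TTheory GRing.Theory Num.Theory.
Local Open Scope ring_scope.
Set Implicit Arguments. Unset Strict Implicit.

Section Constr.
Variable R : realType.
Variable m : nat.
Local Notation V := (shift_vertex m).

Definition sa (v : V) := (val v).1.
Definition sb (v : V) := (val v).2.

Lemma vbnd (v : V) : (1 <= sa v)%N /\ (sa v < sb v)%N /\ (sb v <= m)%N.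
Proof.
move: (valP v); rewrite /sa /sb; case: (val v) => a b /= /andP[/andP[h1 h2] h3]; lia.
Qed.

Definition insd (v : V) t := (sa v < t < sb v)%N.
Definition endp (v : V) t := (sa v == t) || (sb v == t).
Definition loT v t : R := if endp v t then 2 else 0.
Definition hiT v t : R := if insd v t then 1 else 3.
Definition Bx (v : V) : box R m.-1 :=
  Box (fun k : 'I_m.-1 => if val k == 0%N then (sa v)%:R else loT v (val k).+1)
      (fun k : 'I_m.-1 => if val k == 0%N then (sb v)%:R else hiT v (val k).+1).

Lemma loT_hiT v t : loT v t < hiT v t.
Proof.
rewrite /loT /hiT; case E1: (endp v t); case E2: (insd v t); try lra.
exfalso; move: E1 E2; rewrite /endp /insd; lia.
Qed.

Lemma adj_ov u v t : sb u = sa v -> loT u t < hiT v t /\ loT v t < hiT u t.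
Proof.
move=> e; have [u1 [u2 u3]] := vbnd u; have [v1 [v2 v3]] := vbnd v.
rewrite /loT /hiT; case E1: (endp u t); case E2: (insd v t);
  case E3: (endp v t); case E4: (insd u t);
  split; (lra || (exfalso; move: E1 E2 E3 E4; rewrite /endp /insd; lia)).
Qed.

Lemma sep u v : val u <> val v -> (sa u < sb v)%N -> (sa v < sb u)%N ->
  exists t, (2 <= t <= m.-1)%N /\
    ((endp u t && insd v t) || (endp v t && insd u t)).
Proof.
move=> ne h1 h2; have [u1 [u2 u3]] := vbnd u; have [v1 [v2 v3]] := vbnd v.
have key : sa u = sa v -> sb u = sb v -> False.
  move=> e1 e2; apply: ne; move: e1 e2; rewrite /sa /sb.
  by case: (val u) => ??; case: (val v) => ?? /= -> ->.
case: (ltngtP (sa u) (sa v)) => h.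
- by exists (sa v); rewrite /endp /insd; lia.
- by exists (sa u); rewrite /endp /insd; lia.
case: (ltngtP (sb u) (sb v)) => h'.
- by exists (sb u); rewrite /endp /insd; lia.
- by exists (sb v); rewrite /endp /insd; lia.
by exfalso; apply: key.
Qed.

Lemma getk t : (2 <= t <= m.-1)%N -> exists k : 'I_m.-1, val k != 0%N /\ (val k).+1 = t.
Proof.
move=> h; have hk : (t.-1 < m.-1)%N by lia.
by exists (Ordinal hk) => /=; split; lia.
Qed.

Lemma sep_box u v : val u <> val v -> (sa u < sb v)%N -> (sa v < sb u)%N ->
  exists k, hi (Bx u) k < lo (Bx v) k \/ hi (Bx v) k < lo (Bx u) k.
Proof.
move=> ne h1 h2; have [t [ht H]] := sep ne h1 h2.
have [k [nz e]] := getk ht.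
exists k; rewrite /= (negbTE nz) /loT /hiT e.
case/orP: H => /andP[e1 i1]; [right|left]; rewrite e1 i1 /=; lra.
Qed.

Lemma Bx_pos v k : lo (Bx v) k < hi (Bx v) k.
Proof.
rewrite /=; case: ifP => _; last exact: loT_hiT.
by rewrite ltr_nat; have [? []] := vbnd v.
Qed.

Lemma k0ex (u : V) : (0 < m.-1)%N.
Proof. have [u1 [u2 u3]] := vbnd u; lia. Qed.

Lemma meet_ov u v x : in_box (Bx u) x -> in_box (Bx v) x ->
  (sa u <= sb v)%N /\ (sa v <= sb u)%N.
Proof.
move=> hu hv; pose k0 := Ordinal (k0ex u).
have := hu k0; have := hv k0; rewrite /= => /andP[a b] /andP[c d].
by split; rewrite -(ler_nat R); [exact: le_trans c b | exact: le_trans a d].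
Qed.

Lemma int_ov u v x : in_interior (Bx u) x -> in_interior (Bx v) x ->
  (sa u < sb v)%N /\ (sa v < sb u)%N.
Proof.
move=> hu hv; pose k0 := Ordinal (k0ex u).
have := hu k0; have := hv k0; rewrite /= => /andP[a b] /andP[c d].
by split; rewrite -(ltr_nat R); [exact: lt_trans c b | exact: lt_trans a d].
Qed.

Lemma meet_adj u v : val u <> val v -> boxes_meet (Bx u) (Bx v) ->
  sb u = sa v \/ sb v = sa u.
Proof.
move=> ne [x [hu hv]]; have [h1 h2] := meet_ov hu hv.
case: (ltngtP (sa u) (sb v)) => e1; last by right.
  2: lia.
case: (ltngtP (sa v) (sb u)) => e2; last by left.
  2: lia.
exfalso; have [k [H|H]] := sep_box ne e1 e2.
- have := hu k; have := hv k => /andP[a b] /andP[c d].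
  by move: (lt_le_trans H (le_trans a d)); rewrite ltxx.
- have := hu k; have := hv k => /andP[a b] /andP[c d].
  by move: (lt_le_trans H (le_trans c b)); rewrite ltxx.
Qed.

Lemma adj_facet u v : sb u = sa v ->
  boxes_meet (Bx u) (Bx v) /\ meet_is_facet_orth_e1 (Bx u) (Bx v).
Proof.
move=> e; have [u1 [u2 u3]] := vbnd u; have [v1 [v2 v3]] := vbnd v.
split.
  exists (fun k : 'I_m.-1 => if val k == 0%N then (sb u)%:R
                              else Num.max (loT u (val k).+1) (loT v (val k).+1)).
  split=> k /=; case: (val k == 0%N).
  + by rewrite lexx ler_nat ltnW.
  + have [a b] := adj_ov (val k).+1 e; have c := loT_hiT u (val k).+1.
    by rewrite ge_max le_max lexx /= (ltW b) (ltW c).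
  + by rewrite e lexx ler_nat ltnW.
  + have [a b] := adj_ov (val k).+1 e; have c := loT_hiT v (val k).+1.
    by rewrite ge_max le_max lexx /= (ltW a) (ltW c) /= orbT.
exists (sb u)%:R, (fun k => Num.max (lo (Bx u) k) (lo (Bx v) k)),
  (fun k => Num.min (hi (Bx u) k) (hi (Bx v) k)).
split.
  move=> k nz; rewrite /= (negbTE nz).
  have [a b] := adj_ov (val k).+1 e.
  by rewrite gt_max !lt_min a b !loT_hiT.
move=> x; split.
  move=> [hu hv] k; have := hu k; have := hv k; rewrite /=.
  case: (val k == 0%N).
    rewrite -e => /andP[a b] /andP[c d]; apply/eqP; rewrite eq_le a d //.
  by move=> /andP[a b] /andP[c d]; rewrite ge_max le_min a b c d.
move=> H; split=> k; have := H k; rewrite /=; case: (val k == 0%N).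
- by move=> ->; rewrite lexx ler_nat ltnW.
- by rewrite ge_max le_min => /andP[/andP[a b] /andP[c d]]; rewrite a c.
- by move=> ->; rewrite e lexx ler_nat ltnW.
- by rewrite ge_max le_min => /andP[/andP[a b] /andP[c d]]; rewrite b d.
Qed.

Lemma meet_sym d (B1 B2 : box R d) : boxes_meet B1 B2 -> boxes_meet B2 B1.
Proof. by case=> x [a b]; exists x. Qed.

Lemma facet_sym d (B1 B2 : box R d) :
  meet_is_facet_orth_e1 B1 B2 -> meet_is_facet_orth_e1 B2 B1.
Proof.
case=> c [l [h [H1 H2]]]; exists c, l, h; split=> // x.
by rewrite -H2; split=> -[].
Qed.

End Constr.

Theorem mainTheorem11 (R : realType) (m : nat) (hm : (2 <= m)%N) :
  in_CBU R m.-1 (@shift_adj m) /\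
  exists B : shift_vertex m -> box R m.-1,
    CBU_rep (@shift_adj m) B /\
    (forall (v : shift_vertex m) (k : 'I_m.-1), val k = 0%N ->
       lo (B v) k = ((val v).1)%:R /\ hi (B v) k = ((val v).2)%:R).
Proof.
have H2 : exists B : shift_vertex m -> box R m.-1,
    CBU_rep (@shift_adj m) B /\
    (forall (v : shift_vertex m) (k : 'I_m.-1), val k = 0%N ->
       lo (B v) k = ((val v).1)%:R /\ hi (B v) k = ((val v).2)%:R).
  exists (@Bx R m); split; last by move=> v k k0; rewrite /= k0.
  have vne : forall u v : shift_vertex m, u <> v -> val u <> val v.
    by move=> u v ne e; apply: ne; apply: val_inj.
  split.
  - exact: Bx_pos.
  - move=> u v ne [x [hu hv]]; have [e1 e2] := int_ov hu hv.
    have [k [H|H]] := @sep_box R _ _ _ (vne _ _ ne) e1 e2.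
    + have := hu k; have := hv k => /andP[a b] /andP[c d].
      by move: (lt_trans H (lt_trans a d)); rewrite ltxx.
    + have := hu k; have := hv k => /andP[a b] /andP[c d].
      by move: (lt_trans H (lt_trans c b)); rewrite ltxx.
  - move=> u v ne; split.
      case=> e; first by case: (@adj_facet R _ _ _ e).
      by apply: meet_sym; case: (@adj_facet R _ _ _ e).
    by move=> hm'; have := meet_adj (vne _ _ ne) hm'.
  - move=> u v ne hm'; case: (meet_adj (vne _ _ ne) hm') => e.
      by case: (@adj_facet R _ _ _ e).
    by apply: facet_sym; case: (@adj_facet R _ _ _ e).
split; last exact: H2.
by case: H2 => B [hB _]; exists B.
Qed.
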